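(* Let $f_E$ be the solution of the discrete wave equation in the cone $|j|+|k|<n$ with boundary conditions $(0;1,0,0,0)$. Then for all $(j,k,n)\in\Lambda^+$ with $n\ge 1$, $$f_E(j,k,n)=\frac12\sum_{s=1}^{n-1}f_0(j-s,k,n-s).$$
   Context: Let $\Lambda^+=\{(j,k,n)\in\mathbb Z^2\times\mathbb Z_{\ge0}: j+k+n\text{ odd}\}$. The fundamental solution $f_0:\Lambda^+\to\mathbb R$ is defined by: $f_0(j,k,0)=0$ for all $j,k$; $f_0(0,0,1)=1$ and $f_0(j,k,1)=0$ for all other $(j,k)$; and for all $(j,k,n+1)\in\Lambda^+$ with $n\ge1$, $f_0(j,k,n+1)+f_0(j,k,n-1)=\tfrac12\big(f_0(j+1,k,n)+f_0(j-1,k,n)+f_0(j,k+1,n)+f_0(j,k-1,n)\big)$ (the discrete wave equation). Given $b_0,b_E,b_N,b_W,b_S\in\mathbb C$, $f:\Lambda^+\to\mathbb C$ solves the discrete wave equation in the cone $|j|+|k|<n$ with boundary conditions $(b_0;b_E,b_N,b_W,b_S)$ if: (0) $f(j,k,n)=0$ whenever $|j|+|k|\ge n$; (1) $f(0,0,1)=b_0$; (2) for each $n\ge1$: $f(-n,0,n+1)=\tfrac12(f(-n+1,0,n)+b_W)$, $f(0,n,n+1)=\tfrac12(f(0,n-1,n)+b_N)$, $f(0,-n,n+1)=\tfrac12(f(0,-n+1,n)+b_S)$, $f(n,0,n+1)=\tfrac12(f(n-1,0,n)+b_E)$; (3) for each $(j,k,n+1)\in\Lambda^+$ with $n\ge1$,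 $|j|+|k|\le n$, $\{|j|,|k|\}\ne\{0,n\}$, the discrete wave equation above holds for $f$. These conditions determine $f$ uniquely. *)

(* Defs.v *)
(* Functions on Lambda^+ are modelled as total functions
   int -> int -> nat -> R; all conditions are imposed only at points of
   Lambda^+ (j + k + n odd). Values are in an arbitrary numFieldType R
   (this includes algC, the MathComp model of complex algebraic numbers). *)
From HB Require Import structures.
From mathcomp Require Import all_boot all_order all_algebra.
Set Implicit Arguments. Unset Strict Implicit. Unset Printing Implicit Defensive.
Import Order.TTheory GRing.Theory Num.Theory.
Local Open Scope ring_scope.

Definition inLam (j k : int) (n : nat) : bool := odd (absz (j + k + n%:Z)).

(* the discrete wave equation at the point (j,k,n+1) *)
Definition wave_eq {R : numFieldType} (f : int -> int -> nat -> R)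
  (j k : int) (n : nat) : Prop :=
  f j k n.+1 + f j k n.-1 =
  (f (j + 1) k n + f (j - 1) k n + f j (k + 1) n + f j (k - 1) n) / 2.

Definition is_fundamental {R : numFieldType} (f : int -> int -> nat -> R) : Prop :=
  (forall j k, inLam j k 0 -> f j k 0%N = 0) /\
  f 0 0 1%N = 1 /\
  (forall j k, inLam j k 1 -> (j, k) <> (0, 0) -> f j k 1%N = 0) /\
  (forall j k (n : nat), inLam j k n.+1 -> (1 <= n)%N -> wave_eq f j k n).

Definition solves_cone {R : numFieldType} (f : int -> int -> nat -> R)
  (b0 bE bN bW bS : R) : Prop :=
  (forall j k (n : nat), inLam j k n -> n%:Z <= `|j| + `|k| -> f j k n = 0) /\
  f 0 0 1%N = b0 /\
  (forall n : nat, (1 <= n)%N ->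
     f (- n%:Z) 0 n.+1 = (f (- n%:Z + 1) 0 n + bW) / 2 /\
     f 0 n%:Z n.+1 = (f 0 (n%:Z - 1) n + bN) / 2 /\
     f 0 (- n%:Z) n.+1 = (f 0 (- n%:Z + 1) n + bS) / 2 /\
     f n%:Z 0 n.+1 = (f (n%:Z - 1) 0 n + bE) / 2) /\
  (forall j k (n : nat), inLam j k n.+1 -> (1 <= n)%N ->
     `|j| + `|k| <= n%:Z ->
     ~ ((`|j| = 0 /\ `|k| = n%:Z) \/ (`|j| = n%:Z /\ `|k| = 0)) ->
     wave_eq f j k n).

(* Main.v *)
Require Import Defs.
From HB Require Import structures.
From mathcomp Require Import all_boot all_order all_algebra.
From mathcomp Require Import zify ring lra.
Import Order.TTheory GRing.Theory Num.Theory.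
Local Open Scope ring_scope.

Section Proof.
Variables (R : numFieldType) (f0 : int -> int -> nat -> R).
Hypothesis Hf : is_fundamental f0.

Lemma f0cone_aux (n : nat) :
  (forall j k, inLam j k n -> n%:Z <= `|j| + `|k| -> f0 j k n = 0) /\
  (forall j k, inLam j k n.+1 -> n.+1%:Z <= `|j| + `|k| -> f0 j k n.+1 = 0).
Proof.
case: Hf => H0 [H1 [H1' Hw]].
elim: n => [|n [IH1 IH2]].
  split; first by move=> j k hj _; exact: H0.
  move=> j k hj hc; apply: H1' => //; case=> ej ek; move: hc; rewrite ej ek.
  by rewrite normr0 addr0.
split=> // j k hj hc.
have := Hw j k n.+1 hj isT; rewrite /wave_eq /=.
rewrite IH1; try solve [rewrite /inLam in hj *; lia].
rewrite !IH2; try solve [rewrite /inLam in hj *; lia].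
by rewrite !addr0 mul0r.
Qed.

Lemma f0cone j k n : inLam j k n -> n%:Z <= `|j| + `|k| -> f0 j k n = 0.
Proof. exact: (f0cone_aux n).1. Qed.


Ltac side := solve [unfold inLam in *; lia].

Definition G (j k : int) (n : nat) : R :=
  \sum_(1 <= s < n) f0 (j - s%:Z) k (n - s)%N.

Lemma Gcone j k n : (forall s, (1 <= s < n)%N -> (n - s)%N%:Z <= `|j - s%:Z| + `|k|) ->
  inLam j k n -> G j k n = 0.
Proof.
move=> H hj; rewrite /G big_nat_cond big1 // => s /andP[hs _].
apply: f0cone; [side | exact: H].
Qed.

Lemma Grec m : G m.+1%:Z 0 m.+2 = f0 m%:Z 0 m.+1 + G m%:Z 0 m.+1.
Proof.
rewrite /G big_nat_recl //; congr (_ + _); first by congr f0; lia.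
by apply: eq_big_nat => s hs; congr f0; lia.
Qed.

Lemma erec m : f0 m.+1%:Z 0 m.+2 = f0 m%:Z 0 m.+1 / 2.
Proof.
case: Hf => H0 [H1 [H1' Hw]].
have := Hw m.+1%:Z 0 m.+1 ltac:(side) isT; rewrite /wave_eq /=.
rewrite [f0 _ 0 m]f0cone; try side.
rewrite [f0 (_ + 1) _ _]f0cone; try side.
rewrite [f0 _ (_ + 1) _]f0cone; try side.
rewrite [f0 _ (_ - 1) _]f0cone; try side.
rewrite !addr0 add0r => ->; congr (f0 _ _ _ / 2); lia.
Qed.

Lemma two_neq0 : (2 : R) != 0.
Proof. by rewrite pnatr_eq0. Qed.

Lemma edge m : f0 m%:Z 0 m.+1 + G m%:Z 0 m.+1 / 2 = 1.
Proof.
case: Hf => H0 [H1 [H1' Hw]].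
elim: m => [|m IH].
  by rewrite /G big_geq // mul0r addr0; exact: H1.
rewrite erec Grec; apply: etrans IH; have := two_neq0; move=> h2; by field.
Qed.

Lemma Gwave n j k : inLam j k n.+2 -> ~~ ((j == n.+1%:Z) && (k == 0)) ->
  G j k n.+2 + G j k n =
  (G (j + 1) k n.+1 + G (j - 1) k n.+1 + G j (k + 1) n.+1 + G j (k - 1) n.+1) / 2.
Proof.
case: Hf => H0 [H1 [H1' Hw]] hj hnt.
have E1 : G j k n.+2 = \sum_(1 <= s < n.+1) f0 (j - s%:Z) k (n.+1 - s).+1.
  rewrite /G big_nat_recr //= subSnn [X in _ + X]H1'; try side.
    by rewrite addr0; apply: eq_big_nat => s hs; congr f0; lia.
  by case=> e1 e2; move: hnt; rewrite e2 eqxx andbT; apply/negP/negPn; apply/eqP; lia.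
have E2 : G j k n = \sum_(1 <= s < n.+1) f0 (j - s%:Z) k (n.+1 - s).-1.
  case: n hj hnt E1 => [|n] hj hnt E1.
    by rewrite /G !big_geq.
  rewrite /G [RHS]big_nat_recr //= subSnn [X in _ = _ + X]H0; try side.
  by rewrite addr0; apply: eq_big_nat => s hs; congr f0; lia.
rewrite E1 E2 -big_split /= /G -!big_split /= mulr_suml.
apply: eq_big_nat => s hs.
have := Hw (j - s%:Z) k (n.+1 - s)%N ltac:(side) ltac:(lia); rewrite /wave_eq => ->.
by rewrite [j + 1 - _]addrAC [j - 1 - _]addrAC.
Qed.

End Proof.

Arguments G {R}.
Arguments Gcone {R f0}.
Arguments Grec {R f0}.
Arguments edge {R f0}.
Arguments Gwave {R f0}.

Section Main.
Variables (R : numFieldType) (f0 fE : int -> int -> nat -> R).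
Hypothesis Hf : is_fundamental f0.
Hypothesis HE : solves_cone fE 0 1 0 0 0.

Ltac side := solve [unfold inLam in *; lia].

Lemma main_aux n :
  (forall j k, inLam j k n -> fE j k n = G f0 j k n / 2) /\
  (forall j k, inLam j k n.+1 -> fE j k n.+1 = G f0 j k n.+1 / 2).
Proof.
case: HE => Hc [Hb0 [Hb Hin]].
elim: n => [|n [IH1 IH2]].
  split=> j k hj.
    by rewrite Hc ?(lia : 0 <= `|j| + `|k|) // /G big_geq // mul0r.
  rewrite /G big_geq // mul0r.
  have [e|ne] := boolP ((j == 0) && (k == 0)).
    by case/andP: e => /eqP -> /eqP ->.
  by rewrite Hc //; lia.
split=> // j k hj.
case: (ltrP (`|j| + `|k|) n.+2%:Z) => hc; last first.
  rewrite Hc // (Gcone Hf) ?mul0r //; lia.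
have [tA|nA] := boolP ((j == n.+1%:Z) && (k == 0)).
  case/andP: tA => /eqP -> /eqP ->.
  have [_ [_ [_ hE]]] := Hb n.+1 isT; rewrite hE.
  have -> : n.+1%:Z - 1 = n%:Z by lia.
  rewrite IH2; last side.
  rewrite Grec //; have := edge Hf n; have := two_neq0 R => h2 e.
  have ex : f0 n%:Z 0 n.+1 = 1 - G f0 n%:Z 0 n.+1 / 2.
    by apply: (addIr (G f0 n%:Z 0 n.+1 / 2)); rewrite e subrK.
  by rewrite ex; field.
have [tB|nB] := boolP ((j == - n.+1%:Z) && (k == 0)).
  case/andP: tB => /eqP -> /eqP ->.
  have [hE _] := Hb n.+1 isT; rewrite hE.
  rewrite IH2; last side.
  rewrite !(Gcone Hf); try side; try (move=> s hs; lia); by rewrite !mul0r ?add0r ?addr0 ?mul0r.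
have [tC|nC] := boolP ((j == 0) && (k == n.+1%:Z)).
  case/andP: tC => /eqP -> /eqP ->.
  have [_ [hE _]] := Hb n.+1 isT; rewrite hE.
  rewrite IH2; last side.
  rewrite !(Gcone Hf); try side; try (move=> s hs; lia); by rewrite !mul0r ?add0r ?addr0 ?mul0r.
have [tD|nD] := boolP ((j == 0) && (k == - n.+1%:Z)).
  case/andP: tD => /eqP -> /eqP ->.
  have [_ [_ [hE _]]] := Hb n.+1 isT; rewrite hE.
  rewrite IH2; last side.
  rewrite !(Gcone Hf); try side; try (move=> s hs; lia); by rewrite !mul0r ?add0r ?addr0 ?mul0r.
have W := Hin j k n.+1 hj isT ltac:(lia) ltac:(lia).
rewrite /wave_eq /= in W.
rewrite IH1 in W; last side.
rewrite !IH2 in W; try side.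
have Gw := Gwave Hf n j k hj nA.
apply: (addIr (G f0 j k n / 2)); rewrite W -[RHS]mulrDl Gw -!mulrDl //.
Qed.

End Main.

Theorem mainTheorem5 (R : numFieldType) (f0 fE : int -> int -> nat -> R) :
  is_fundamental f0 ->
  solves_cone fE 0 1 0 0 0 ->
  forall (j k : int) (n : nat), inLam j k n -> (1 <= n)%N ->
    fE j k n = (\sum_(1 <= s < n) f0 (j - s%:Z) k (n - s)%N) / 2.
Proof.
move=> Hf HE j k n hj _.
exact: ((@main_aux R f0 fE Hf HE n).1 j k hj).
Qed.
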